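(* Consider the 2-node network dynamical system \[ \dot x_1 = a_1x_1 + w_{12}(x_2-x_1) - w x_2^3 + w(x_1+x_2)^3,\qquad \dot x_2 = a_2x_2 + w_{21}(x_1-x_2) + w x_2^3, \] with $(x_1,x_2)\in\mathbb{R}^2$ and real parameters $a_1,a_2,w_{12},w_{21},w$, where $a_1\neq 0$, $a_2\neq0$, and the parameters satisfy \[ a_1-w_{12}+a_2-w_{21}=0,\qquad a_1a_2-a_1w_{21}-a_2w_{12}=0, \] so that the origin is a nilpotent equilibrium. If $w=0$, then the origin is unstable. On the other hand, if $a_1=-a_2=\alpha$ with $\alpha>0$ and $w<0$, then the origin is locally asymptotically stable.
   Context: An equilibrium $x^*$ of $\dot x=f(x)$ is called nilpotent if all eigenvalues of the Jacobian $\mathrm{D}_xf(x^* )$ are zero. The two displayed algebraic conditions are exactly the conditions that the linearization matrix at the origin has zero trace and zero determinant. *)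

(* Defs.v *)
From Stdlib Require Import Reals.
Open Scope R_scope.

Definition norm2 (x : R * R) : R := sqrt (fst x ^ 2 + snd x ^ 2).

Definition solution_on (f : R * R -> R * R) (x0 : R * R) (T : R)
  (phi : R -> R * R) : Prop :=
  phi 0 = x0 /\
  (forall t, 0 <= t < T ->
     continuity_pt (fun s => fst (phi s)) t /\
     continuity_pt (fun s => snd (phi s)) t) /\
  (forall t, 0 < t < T ->
     derivable_pt_lim (fun s => fst (phi s)) t (fst (f (phi t))) /\
     derivable_pt_lim (fun s => snd (phi s)) t (snd (f (phi t)))).

Definition global_solution (f : R * R -> R * R) (x0 : R * R)
  (phi : R -> R * R) : Prop :=
  forall T, 0 < T -> solution_on f x0 T phi.

(* Lyapunov stability of the origin (assumed to be an equilibrium):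
   solutions starting delta-close to 0 stay eps-close to 0 as long as
   they exist. *)
Definition lyapunov_stable (f : R * R -> R * R) : Prop :=
  forall eps, 0 < eps -> exists delta, 0 < delta /\
    forall x0 T phi, norm2 x0 < delta -> solution_on f x0 T phi ->
      forall t, 0 <= t < T -> norm2 (phi t) < eps.

Definition unstable (f : R * R -> R * R) : Prop := ~ lyapunov_stable f.

Definition loc_asymp_stable (f : R * R -> R * R) : Prop :=
  lyapunov_stable f /\
  exists delta, 0 < delta /\
    forall x0 phi, norm2 x0 < delta -> global_solution f x0 phi ->
      forall e, 0 < e -> exists t0, forall t, t0 <= t -> norm2 (phi t) < e.

Definition net_field (a1 a2 w12 w21 w : R) (x : R * R) : R * R :=
  let x1 := fst x in let x2 := snd x in
  (a1 * x1 + w12 * (x2 - x1) - w * x2 ^ 3 + w * (x1 + x2) ^ 3,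
   a2 * x2 + w21 * (x1 - x2) + w * x2 ^ 3).

(* Main.v *)
Require Import Defs.
From Stdlib Require Import Reals Lra Psatz Classical.
From Coquelicot Require Import Coquelicot.
Open Scope R_scope.

Lemma mvt_bound (g dg : R -> R) (a b m : R) :
  a < b ->
  (forall x, a < x < b -> derivable_pt_lim g x (dg x)) ->
  (forall x, a <= x <= b -> continuity_pt g x) ->
  (forall x, a < x < b -> dg x <= - m) ->
  g b - g a <= - m * (b - a).
Proof.
  intros Hab Hd Hc Hn.
  destruct (MVT_gen g a b (fun x => Rmin (dg x) (-m))) as [c [Hc' E]]; cbv zeta in *.
  - rewrite Rmin_left, Rmax_right by lra. intros x Hx. apply is_derive_Reals.
    rewrite Rmin_left by (apply Hn; lra). auto.
  - rewrite Rmin_left, Rmax_right by lra. auto.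
  - rewrite E. apply Rmult_le_compat_r; [lra | apply Rmin_r].
Qed.

Lemma barrier (g dg : R -> R) (a b M : R) :
  (forall t, a <= t < b -> continuity_pt g t) ->
  (forall t, a < t < b -> derivable_pt_lim g t (dg t)) ->
  (forall t, a < t < b -> M < g t -> dg t <= 0) ->
  g a <= M -> forall t, a <= t < b -> g t <= M.
Proof.
  intros Hc Hd Hn Ha t Ht.
  destruct (Rle_or_lt (g t) M) as [|Hgt]; [auto|exfalso].
  set (E := fun x => a <= x <= t /\ g x <= M).
  destruct (completeness E) as [s [Hub Hlub]].
  { exists t. intros x [Hx _]. lra. }
  { exists a. split; [lra|auto]. }
  assert (Has : a <= s) by (apply Hub; split; [lra | auto]).
  assert (Hst : s <= t) by (apply Hlub; intros x [Hx _]; lra).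
  assert (Hgs : g s <= M).
  { destruct (Rle_or_lt (g s) M) as [|H]; [auto|exfalso].
    assert (Hcs := Hc s ltac:(lra)).
    unfold continuity_pt, continue_in, limit1_in, limit_in in Hcs. simpl in Hcs.
    destruct (Hcs (g s - M)) as [d [Hd0 Hdd]]; [lra|].
    assert (Hex : exists x, E x /\ s - d < x).
    { apply NNPP; intro Hno. assert (Hu : is_upper_bound E (s - d)).
      { intros x Ex. destruct (Rle_or_lt x (s-d)); auto. exfalso; apply Hno; eauto. }
      specialize (Hlub _ Hu). lra. }
    destruct Hex as [x [[Hx1 Hx2] Hx3]].
    assert (Hxs : x <= s) by (apply Hub; split; auto).
    destruct (Req_dec x s) as [->|Hxs']; [lra|].
    specialize (Hdd x). unfold R_dist, D_x, no_cond in Hdd.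
    assert (Rabs (g x - g s) < g s - M).
    { apply Hdd. split; [split; auto|]. rewrite Rabs_left; lra. }
    rewrite Rabs_left in H0; lra. }
  assert (Hst' : s < t) by (destruct Hst; auto; subst; lra).
  assert (Hgt' : forall x, s < x <= t -> M < g x).
  { intros x Hx. destruct (Rle_or_lt (g x) M) as [Hle|]; auto.
    assert (x <= s) by (apply Hub; split; [lra|auto]). lra. }
  assert (HM := mvt_bound g dg s t 0 Hst').
  assert (g t - g s <= - 0 * (t - s)).
  { apply HM.
    - intros; apply Hd; lra.
    - intros; apply Hc; lra.
    - intros x Hx. rewrite Ropp_0. apply Hn; [lra|]. apply Hgt'; lra. }
  lra.
Qed.

Lemma reach (g dg : R -> R) (a L m : R) : 0 < m ->
  (forall t, a <= t -> continuity_pt g t) ->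
  (forall t, a < t -> derivable_pt_lim g t (dg t)) ->
  (forall t, a < t -> L <= g t -> dg t <= - m) ->
  exists t1, a <= t1 /\ g t1 < L.
Proof.
  intros Hm Hc Hd Hn.
  destruct (Rlt_or_le (g a) L) as [H|H]; [exists a; split; [lra|auto]|].
  apply NNPP; intro Hno.
  assert (Hall : forall t, a <= t -> L <= g t).
  { intros t Ht. destruct (Rlt_or_le (g t) L); auto. exfalso; apply Hno; eauto. }
  set (t := a + (g a - L)/m + 1).
  assert (Hq : 0 <= (g a - L)/m) by (apply Rdiv_le_0_compat; lra).
  assert (HM := mvt_bound g dg a t m ltac:(unfold t; lra)).
  assert (g t - g a <= - m * (t - a)).
  { apply HM.
    - intros; apply Hd; lra.
    - intros; apply Hc; lra.
    - intros x Hx. apply Hn; [lra|]. apply Hall; lra. }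
  assert (m * (t - a) = g a - L + m) by (unfold t; field; lra).
  assert (L <= g t) by (apply Hall; unfold t; lra).
  nra.
Qed.


Lemma norm2_lt x d : 0 < d -> norm2 x < d -> fst x ^ 2 + snd x ^ 2 < d ^ 2.
Proof.
  intros Hd H. unfold norm2 in H.
  assert (0 <= fst x ^ 2 + snd x ^ 2) by nra.
  rewrite <- (sqrt_sqrt (fst x ^ 2 + snd x ^ 2)) by auto.
  assert (0 <= sqrt (fst x ^ 2 + snd x ^ 2)) by apply sqrt_pos. nra.
Qed.

Lemma lt_norm2 x d : 0 < d -> fst x ^ 2 + snd x ^ 2 < d ^ 2 -> norm2 x < d.
Proof.
  intros Hd H. unfold norm2. rewrite <- (sqrt_pow2 d) by lra.
  apply sqrt_lt_1_alt. split; [nra|auto].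
Qed.

Lemma part1 (a1 a2 w12 w21 : R) :
  a1 <> 0 ->
  a1 - w12 + a2 - w21 = 0 ->
  a1 * a2 - a1 * w21 - a2 * w12 = 0 ->
  unstable (net_field a1 a2 w12 w21 0).
Proof.
  intros Ha1 Htr Hdet Hst.
  assert (Hw12 : w12 <> 0).
  { intro H; subst w12. assert (a2 - w21 = - a1) by lra.
    assert (a1 * (a2 - w21) = 0) by lra. nra. }
  destruct (Hst 1 ltac:(lra)) as [d [Hd H]].
  set (s := d / 2).
  set (phi := fun t : R => (t * s * w12, s + t * s * (a2 - w21))).
  set (t := 2 / (s * Rabs w12)).
  assert (Haw : 0 < Rabs w12) by (apply Rabs_pos_lt; auto).
  assert (Ht : 0 < t) by (unfold t, s; apply Rdiv_lt_0_compat; [lra| apply Rmult_lt_0_compat; lra]).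
  assert (Hsol : solution_on (net_field a1 a2 w12 w21 0) (0, s) (t + 1) phi).
  { split; [unfold phi; f_equal; ring|]. split.
    - intros x Hx. split; apply derivable_continuous_pt.
      + exists (s * w12). apply is_derive_Reals. unfold phi; simpl. auto_derive; auto; ring.
      + exists (s * (a2 - w21)). apply is_derive_Reals. unfold phi; simpl. auto_derive; auto; ring.
    - intros x Hx.
      assert (H1 : x*s*w12*(a1-w12+a2-w21) = 0) by (rewrite Htr; ring).
      assert (H2 : x*s*((a2-w21)^2+w21*w12) = 0).
      { replace ((a2-w21)^2+w21*w12) with ((a2-w21)*(a1-w12+a2-w21) - (a1 * a2 - a1 * w21 - a2 * w12)) by ring.
        rewrite Htr, Hdet; ring. }
      split; apply is_derive_Reals; unfold phi, net_field; simpl; auto_derive; auto; lra. }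
  assert (Hn : norm2 (phi t) < 1) by (apply (H (0, s) (t + 1) phi); [|exact Hsol|lra];
     apply lt_norm2; [lra|]; simpl; unfold s; nra).
  apply norm2_lt in Hn; [|lra]. unfold phi in Hn; simpl in Hn.
  assert (t * s * w12 * (t * s * w12) = 4).
  { unfold t. destruct (Rcase_abs w12); [rewrite Rabs_left by auto | rewrite Rabs_right by auto];
    field; unfold s; split; lra. }
  pose proof (Rle_0_sqr (s + t * s * (a2 - w21))). unfold Rsqr in *. lra.
Qed.


Definition UU (phi : R -> R * R) t := fst (phi t) + snd (phi t).
Definition gu (phi : R -> R * R) t := UU phi t * UU phi t.
Definition gv (phi : R -> R * R) t := snd (phi t) * snd (phi t).

Section P2.
Variables alpha w : R.
Let F := net_field alpha (-alpha) (alpha/2) (-alpha/2) w.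

Lemma gu_cont phi t : continuity_pt (fun s => fst (phi s)) t ->
  continuity_pt (fun s => snd (phi s)) t -> continuity_pt (gu phi) t.
Proof.
  intros H1 H2.
  assert (HU : continuity_pt (UU phi) t) by exact (continuity_pt_plus _ _ t H1 H2).
  exact (continuity_pt_mult _ _ t HU HU).
Qed.

Lemma gv_cont phi t : continuity_pt (fun s => snd (phi s)) t -> continuity_pt (gv phi) t.
Proof. intros H2. exact (continuity_pt_mult _ _ t H2 H2). Qed.

Lemma gu_der phi t :
  derivable_pt_lim (fun s => fst (phi s)) t (fst (F (phi t))) ->
  derivable_pt_lim (fun s => snd (phi s)) t (snd (F (phi t))) ->
  derivable_pt_lim (gu phi) t (2 * w * UU phi t ^ 4).
Proof.
  intros H1 H2.
  assert (HU := derivable_pt_lim_plus _ _ t _ _ H1 H2).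
  assert (H := derivable_pt_lim_mult _ _ t _ _ HU HU).
  replace (2 * w * UU phi t ^ 4) with
    ((fst (F (phi t)) + snd (F (phi t))) * UU phi t + UU phi t * (fst (F (phi t)) + snd (F (phi t)))).
  - exact H.
  - unfold F, net_field, UU. simpl. field.
Qed.

Lemma gv_der phi t :
  derivable_pt_lim (fun s => snd (phi s)) t (snd (F (phi t))) ->
  derivable_pt_lim (gv phi) t (- alpha * UU phi t * snd (phi t) + 2 * w * snd (phi t) ^ 4).
Proof.
  intros H2.
  assert (H := derivable_pt_lim_mult _ _ t _ _ H2 H2).
  replace (- alpha * UU phi t * snd (phi t) + 2 * w * snd (phi t) ^ 4) with
    (snd (F (phi t)) * snd (phi t) + snd (phi t) * snd (F (phi t))).
  - exact H.
  - unfold F, net_field, UU. simpl. field.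
Qed.

Lemma absbound U c : 0 <= c -> U * U <= c * c -> Rabs U <= c.
Proof. intros. unfold Rabs; destruct (Rcase_abs U); nra. Qed.

Lemma alg_v U V K : 0 < alpha -> w < 0 -> 0 < K -> alpha * Rabs U <= - w * K ^ 3 ->
  K * K <= V * V -> - alpha * U * V + 2 * w * V ^ 4 <= w * K ^ 4.
Proof.
  intros Ha Hw HK HU HV.
  assert (HaV : K <= Rabs V) by (destruct (Rle_or_lt K (Rabs V)); auto;
     assert (Rabs V * Rabs V = V * V) by (unfold Rabs; destruct (Rcase_abs V); ring);
     assert (0 <= Rabs V) by apply Rabs_pos; nra).
  assert (E1 : - alpha * U * V <= alpha * Rabs U * Rabs V).
  { assert (- (U * V) <= Rabs U * Rabs V).
    { rewrite <- Rabs_mult. pose proof (Rle_abs (-(U*V))) as H. rewrite Rabs_Ropp in H. exact H. }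
    nra. }
  assert (E2 : alpha * Rabs U * Rabs V <= - w * K ^ 3 * Rabs V) by (apply Rmult_le_compat_r; [apply Rabs_pos|auto]).
  assert (E3 : K ^ 3 * Rabs V <= Rabs V ^ 4).
  { assert (K^3 <= Rabs V ^ 3) by (apply pow_incr; lra). nra. }
  assert (E4 : Rabs V ^ 4 = V ^ 4) by (unfold Rabs; destruct (Rcase_abs V); ring).
  assert (E5 : K ^ 4 <= V ^ 4) by (rewrite <- E4; apply pow_incr; lra).
  nra.
Qed.


Lemma two_alpha_eta K : 0 < alpha -> w < 0 -> 0 < K ->
  2 * alpha * Rmin K (- w * K ^ 3 / (2 * alpha)) <= - w * K ^ 3.
Proof.
  intros Ha Hw HK.
  assert (H : Rmin K (- w * K ^ 3 / (2 * alpha)) <= - w * K ^ 3 / (2 * alpha)) by apply Rmin_r.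
  apply (Rmult_le_compat_l (2*alpha)) in H; [|lra].
  replace (2*alpha*(- w * K ^ 3 / (2 * alpha))) with (- w * K ^ 3) in H by (field; lra). lra.
Qed.

Lemma eta_pos K : 0 < alpha -> w < 0 -> 0 < K -> 0 < Rmin K (- w * K ^ 3 / (2 * alpha)).
Proof.
  intros. apply Rmin_pos; auto. apply Rdiv_lt_0_compat; [|lra].
  assert (0 < K ^ 3) by (apply pow_lt; auto). nra.
Qed.

Lemma stab : 0 < alpha -> w < 0 -> lyapunov_stable F.
Proof.
  intros Ha Hw eps Heps.
  set (K := eps / 3). assert (HK : 0 < K) by (unfold K; lra).
  set (eta := Rmin K (- w * K ^ 3 / (2 * alpha))).
  assert (Heta : 0 < eta) by (apply eta_pos; auto).
  assert (H2e : 2 * alpha * eta <= - w * K ^ 3) by (apply two_alpha_eta; auto).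
  assert (HeK : eta <= K) by apply Rmin_l.
  assert (HKe : eps = 3 * K) by (unfold K; field).
  clearbody eta K.
  exists eta. split; auto.
  intros x0 T phi Hx0 Hsol t Ht.
  destruct Hsol as [H0 [Hc Hd]].
  apply norm2_lt in Hx0; auto.
  assert (Hgu0 : gu phi 0 < 2 * (eta * eta)).
  { unfold gu, UU. rewrite H0. pose proof (Rle_0_sqr (fst x0 - snd x0)). unfold Rsqr in *. nra. }
  assert (Hgv0 : gv phi 0 <= K * K).
  { unfold gv. rewrite H0. nra. }
  assert (Hgu : forall s, 0 <= s < T -> gu phi s <= gu phi 0).
  { apply (barrier (gu phi) (fun s => 2 * w * UU phi s ^ 4)).
    - intros s Hs. destruct (Hc s Hs). apply gu_cont; auto.
    - intros s Hs. destruct (Hd s Hs). apply gu_der; auto.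
    - intros s Hs _. assert (0 <= UU phi s ^ 4) by (replace (UU phi s ^ 4) with ((UU phi s * UU phi s) * (UU phi s * UU phi s)) by ring; nra). nra.
    - lra. }
  assert (HU : forall s, 0 <= s < T -> alpha * Rabs (UU phi s) <= - w * K ^ 3).
  { intros s Hs. assert (Rabs (UU phi s) <= 2 * eta).
    { apply absbound; [lra|]. specialize (Hgu s Hs). unfold gu in *. assert (0 <= eta * eta) by nra. lra. }
    nra. }
  assert (Hgv : forall s, 0 <= s < T -> gv phi s <= K * K).
  { apply (barrier (gv phi) (fun s => - alpha * UU phi s * snd (phi s) + 2 * w * snd (phi s) ^ 4)).
    - intros s Hs. destruct (Hc s Hs). apply gv_cont; auto.
    - intros s Hs. destruct (Hd s Hs). apply gv_der; auto.
    - intros s Hs Hlt. assert (0 < K ^ 4) by (apply pow_lt; auto).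
      assert (- alpha * UU phi s * snd (phi s) + 2 * w * snd (phi s) ^ 4 <= w * K ^ 4).
      { apply alg_v; auto. apply HU; lra. unfold gv in Hlt; lra. }
      nra.
    - auto. }
  apply lt_norm2; auto.
  specialize (Hgu t Ht). specialize (Hgv t Ht). unfold gu, gv, UU in *.
  assert (fst (phi t) ^ 2 + snd (phi t) ^ 2 <= 2 * ((fst (phi t) + snd (phi t)) * (fst (phi t) + snd (phi t))) + 3 * (snd (phi t) * snd (phi t))) by (pose proof (Rle_0_sqr (fst (phi t) + 2 * snd (phi t))); unfold Rsqr in *; nra).
  subst. nra.
Qed.

Lemma attr : 0 < alpha -> w < 0 ->
  exists delta, 0 < delta /\
    forall x0 phi, norm2 x0 < delta -> global_solution F x0 phi ->
      forall e, 0 < e -> exists t0, forall t, t0 <= t -> norm2 (phi t) < e.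
Proof.
  intros Ha Hw. exists 1. split; [lra|].
  intros x0 phi _ Hglob e He.
  set (K := e / 3). assert (HK : 0 < K) by (unfold K; lra).
  set (eta := Rmin K (- w * K ^ 3 / (2 * alpha))).
  assert (Heta : 0 < eta) by (apply eta_pos; auto).
  assert (H2e : 2 * alpha * eta <= - w * K ^ 3) by (apply two_alpha_eta; auto).
  assert (HeK : eta <= K) by apply Rmin_l.
  assert (HKe : e = 3 * K) by (unfold K; field).
  clearbody eta K.
  assert (Hc : forall t, 0 <= t -> continuity_pt (fun s => fst (phi s)) t /\ continuity_pt (fun s => snd (phi s)) t).
  { intros t Ht. destruct (Hglob (t + 1) ltac:(lra)) as [_ [Hc _]]. apply Hc; lra. }
  assert (Hd : forall t, 0 < t -> derivable_pt_lim (fun s => fst (phi s)) t (fst (F (phi t))) /\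
      derivable_pt_lim (fun s => snd (phi s)) t (snd (F (phi t)))).
  { intros t Ht. destruct (Hglob (t + 1) ltac:(lra)) as [_ [_ Hd]]. apply Hd; lra. }
  assert (Heta4 : 0 < eta ^ 4) by (apply pow_lt; auto).
  destruct (reach (gu phi) (fun s => 2 * w * UU phi s ^ 4) 0 (eta * eta) (- 2 * w * eta ^ 4))
    as [t1 [Ht1 Hgt1]].
  { nra. }
  { intros s Hs. destruct (Hc s Hs). apply gu_cont; auto. }
  { intros s Hs. destruct (Hd s Hs). apply gu_der; auto. }
  { intros s Hs Hle. unfold gu in Hle.
    replace (UU phi s ^ 4) with ((UU phi s * UU phi s) * (UU phi s * UU phi s)) by ring.
    replace (eta ^ 4) with ((eta * eta) * (eta * eta)) by ring.
    assert (0 <= eta * eta) by nra.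
    assert ((eta * eta) * (eta * eta) <= (UU phi s * UU phi s) * (UU phi s * UU phi s)) by (apply Rmult_le_compat; auto).
    nra. }
  assert (HU1 : forall t, t1 <= t -> gu phi t <= eta * eta).
  { intros t Ht. apply (barrier (gu phi) (fun s => 2 * w * UU phi s ^ 4) t1 (t + 1)); try lra.
    - intros s Hs. destruct (Hc s ltac:(lra)). apply gu_cont; auto.
    - intros s Hs. destruct (Hd s ltac:(lra)). apply gu_der; auto.
    - intros s Hs _. assert (0 <= UU phi s ^ 4) by (replace (UU phi s ^ 4) with ((UU phi s * UU phi s) * (UU phi s * UU phi s)) by ring; nra). nra. }
  assert (HU : forall s, t1 <= s -> alpha * Rabs (UU phi s) <= - w * K ^ 3).
  { intros s Hs. assert (Rabs (UU phi s) <= 2 * eta).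
    { apply absbound; [lra|]. specialize (HU1 s Hs). unfold gu in *. assert (0 <= eta * eta) by nra. lra. }
    nra. }
  assert (HK4 : 0 < K ^ 4) by (apply pow_lt; auto).
  destruct (reach (gv phi) (fun s => - alpha * UU phi s * snd (phi s) + 2 * w * snd (phi s) ^ 4) t1 (K * K) (- w * K ^ 4))
    as [t2 [Ht2 Hgt2]].
  { nra. }
  { intros s Hs. destruct (Hc s ltac:(lra)). apply gv_cont; auto. }
  { intros s Hs. destruct (Hd s ltac:(lra)). apply gv_der; auto. }
  { intros s Hs Hle. replace (- (- w * K ^ 4)) with (w * K ^ 4) by ring.
    apply alg_v; auto. apply HU; lra. }
  assert (HV : forall t, t2 <= t -> gv phi t <= K * K).
  { intros t Ht. apply (barrier (gv phi) (fun s => - alpha * UU phi s * snd (phi s) + 2 * w * snd (phi s) ^ 4) t2 (t + 1)); try lra.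
    - intros s Hs. destruct (Hc s ltac:(lra)). apply gv_cont; auto.
    - intros s Hs. destruct (Hd s ltac:(lra)). apply gv_der; auto.
    - intros s Hs Hlt.
      assert (- alpha * UU phi s * snd (phi s) + 2 * w * snd (phi s) ^ 4 <= w * K ^ 4).
      { apply alg_v; auto. apply HU; lra. unfold gv in Hlt; lra. }
      nra. }
  exists t2. intros t Ht.
  apply lt_norm2; auto.
  specialize (HU1 t ltac:(lra)). specialize (HV t Ht). unfold gu, gv, UU in *.
  assert (fst (phi t) ^ 2 + snd (phi t) ^ 2 <= 2 * ((fst (phi t) + snd (phi t)) * (fst (phi t) + snd (phi t))) + 3 * (snd (phi t) * snd (phi t))) by (pose proof (Rle_0_sqr (fst (phi t) + 2 * snd (phi t))); unfold Rsqr in *; nra).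
  subst. nra.
Qed.

End P2.

Theorem proposition1 (a1 a2 w12 w21 w : R) :
  a1 <> 0 -> a2 <> 0 ->
  a1 - w12 + a2 - w21 = 0 ->
  a1 * a2 - a1 * w21 - a2 * w12 = 0 ->
  (w = 0 -> unstable (net_field a1 a2 w12 w21 w)) /\
  (forall alpha : R, a1 = alpha -> a2 = - alpha -> 0 < alpha -> w < 0 ->
     loc_asymp_stable (net_field a1 a2 w12 w21 w)).
Proof.
  intros Ha1 Ha2 Htr Hdet. split.
  - intros ->. apply part1; auto.
  - intros alpha -> -> Ha Hw.
    assert (E1 : w21 = - w12) by lra.
    subst w21.
    assert (E2 : alpha * (w12 + w12 - alpha) = 0) by lra.
    apply Rmult_integral in E2. destruct E2 as [E2|E2]; [lra|].
    assert (E3 : w12 = alpha / 2) by lra. subst w12.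
    replace (- (alpha / 2)) with (- alpha / 2) by field.
    split; [apply stab | apply attr]; auto.
Qed.
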